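(* Consider the setting described in the context, with $\beta>0$, budget $C>1$, and $\xi\in(0,C-1]$. Let $\mathcal{L}_\beta^{\lambda}:=\max_{\pi\in\Pi}\mathcal{L}_\beta(\pi,\lambda)$ and let $\lambda^\ast\in\arg\min_{\lambda\ge0}\mathcal{L}_\beta^{\lambda}$ be an optimal dual variable. Then $$0\le\lambda^\ast\le\frac{\mathcal{L}_\beta^{\lambda^\ast}-\mathbb{P}_{(z,l)\sim\underline{\rho}}(\Phi_0(z)=l)}{\xi},$$ and hence the set $\Lambda^\ast$ of all optimal dual variables is bounded.
   Context: Let $\mathcal{Z}$ be a set of inputs and labels $l\in\{0,1\}$. Two judge functions $\Phi_0,\Phi_1:\mathcal{Z}\to\{0,1\}$ are given. The reward is $r(z,a,l)=\mathbb{I}(\Phi_a(z)=l)$ and the cost is $c:\mathcal{Z}\times\{0,1\}\to[0,\infty)$ with $c(z,0)=1$ for all $z$. Let $\rho,\underline{\rho},\overline{\rho}$ be fixed distributions on $\mathcal{Z}\times\{0,1\}$. A policy $\pi$ assigns to each $z$ a distribution $\pi(\cdot\mid z)$ on $\{0,1\}$; $\Pi$ is a class of policies containing the policy $\pi_0$ with $\pi_0(0\mid z)=1$ for all $z$. Entropy: $\mathcal{H}(\pi):=\mathbb{E}_{(z,l)\sim\rho}\big[-\sum_{a}\pi(a\mid z)\log\pi(a\mid z)\big]$. Regularized Lagrangian: $$\mathcal{L}_\beta(\pi,\lambda)=\mathbb{E}_{(z,l)\sim\underline{\rho},a\sim\pi(\cdot\mid z)}[r(z,a,l)]-\lambda\Big(\mathbb{E}_{(z,l)\sim\overline{\rho},a\sim\pi(\cdot\mid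 z)}[c(z,a)]-C\Big)+\beta\Big(\mathcal{H}(\pi)+\tfrac12\lambda^2\Big).$$ *)

(* Defs.v *)
From HB Require Import structures.
From mathcomp Require Import all_boot all_order all_algebra.
From mathcomp Require Import all_classical all_reals all_analysis.
Set Implicit Arguments. Unset Strict Implicit. Unset Printing Implicit Defensive.
Import Order.TTheory GRing.Theory Num.Theory.
Local Open Scope classical_set_scope.
Local Open Scope ring_scope.

Section Setting.
Variables (R : realType) (d : measure_display) (Z : measurableType d).

(* A policy pi : Z -> bool -> R; pi z a = pi(a | z); action false = 0, true = 1. *)
Definition is_policy (pi : Z -> bool -> R) : Prop :=
  forall z, (forall a, 0 <= pi z a) /\ pi z false + pi z true = 1.

Definition pi0 : Z -> bool -> R := fun _ a => if a then 0 else 1.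

Definition judge (Phi0 Phi1 : Z -> bool) (a : bool) : Z -> bool :=
  if a then Phi1 else Phi0.

Definition reward (Phi0 Phi1 : Z -> bool) (z : Z) (a l : bool) : R :=
  (judge Phi0 Phi1 a z == l)%:R.

Definition pol_expect (P : probability (Z * bool)%type R) (pi : Z -> bool -> R)
    (f : Z -> bool -> bool -> R) : \bar R :=
  (\int[P]_zl (\sum_(a : bool) pi zl.1 a * f zl.1 a zl.2)%:E)%E.

(* entropy H(pi) = E_{(z,l)~rho}[ - sum_a pi(a|z) log pi(a|z) ]  (ln 0 = 0) *)
Definition entropy (rho : probability (Z * bool)%type R) (pi : Z -> bool -> R) : \bar R :=
  (\int[rho]_zl (- \sum_(a : bool) pi zl.1 a * ln (pi zl.1 a))%:E)%E.

Definition lagrangian (Phi0 Phi1 : Z -> bool) (c : Z -> bool -> R)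
    (rho rhou rhoo : probability (Z * bool)%type R) (C beta : R)
    (pi : Z -> bool -> R) (lam : R) : \bar R :=
  (pol_expect rhou pi (reward Phi0 Phi1)
   - lam%:E * (pol_expect rhoo pi (fun z a _ => c z a) - C%:E)
   + beta%:E * (entropy rho pi + (lam ^+ 2 / 2)%:E))%E.

Definition dual_fun (Phi0 Phi1 : Z -> bool) (c : Z -> bool -> R)
    (rho rhou rhoo : probability (Z * bool)%type R) (C beta : R)
    (Pi : set (Z -> bool -> R)) (lam : R) : \bar R :=
  ereal_sup [set lagrangian Phi0 Phi1 c rho rhou rhoo C beta pi lam | pi in Pi].

Definition opt_duals (Phi0 Phi1 : Z -> bool) (c : Z -> bool -> R)
    (rho rhou rhoo : probability (Z * bool)%type R) (C beta : R)
    (Pi : set (Z -> bool -> R)) : set R :=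
  [set lam | 0 <= lam /\ forall mu, 0 <= mu ->
     (dual_fun Phi0 Phi1 c rho rhou rhoo C beta Pi lam
      <= dual_fun Phi0 Phi1 c rho rhou rhoo C beta Pi mu)%E].

End Setting.

(* Main.v *)
Require Import Defs.
From HB Require Import structures.
From mathcomp Require Import all_boot all_order all_algebra.
From mathcomp Require Import all_classical all_reals all_analysis.
From mathcomp Require Import lra.
Import Order.TTheory GRing.Theory Num.Theory.
Local Open Scope classical_set_scope.
Local Open Scope ring_scope.

Lemma le_int_nm (R : realType) d (T : measurableType d)
  (mu : {measure set T -> \bar R}) (f g : T -> \bar R) :
  (forall x, (0 <= f x)%E) -> (forall x, (f x <= g x)%E) ->
  (\int[mu]_x f x <= \int[mu]_x g x)%E.
Proof.
move=> f0 fg; rewrite !ge0_integralTE //; last first.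
  by move=> x; exact: le_trans (f0 x) (fg x).
apply: ge_ereal_sup => _ [h hf <-]; apply: ereal_sup_ubound.
by exists h => // x; exact: le_trans (hf x) (fg x).
Qed.

Lemma preim_meas d (T : measurableType d) (f : T -> bool) (b : bool) :
  measurable_fun setT f -> measurable (f @^-1` [set b]).
Proof.
move=> mf; have := mf measurableT [set b] I; by rewrite setTI.
Qed.

Lemma int_cst_prob (R : realType) d (T : measurableType d)
  (P : probability T R) (r : R) : (\int[P]_x (cst r%:E) x = r%:E)%E.
Proof.
rewrite integral_cst; last exact: measurableT.
rewrite [X in (_ * X)%E](_ : _ = 1%E) ?mule1 //; exact: probability_setT.
Qed.
Arguments int_cst_prob {R d T}.

Theorem lemmaA3 (R : realType) (d : measure_display) (Z : measurableType d)
    (Phi0 Phi1 : Z -> bool) (c : Z -> bool -> R)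
    (rho rhou rhoo : probability (Z * bool)%type R)
    (Pi : set (Z -> bool -> R)) (beta C xi lamstar : R) :
  measurable_fun setT Phi0 -> measurable_fun setT Phi1 ->
  (forall z a, 0 <= c z a) -> (forall z, c z false = 1) ->
  (forall a, measurable_fun setT (fun z => c z a)) ->
  (forall pi, Pi pi -> is_policy pi /\ forall a, measurable_fun setT (fun z => pi z a)) ->
  Pi (@pi0 R d Z) ->
  0 < beta -> 1 < C -> 0 < xi -> xi <= C - 1 ->
  lamstar \in opt_duals Phi0 Phi1 c rho rhou rhoo C beta Pi ->
  (0 <= lamstar /\
   (lamstar%:E <=
     (dual_fun Phi0 Phi1 c rho rhou rhoo C beta Pi lamstar
      - rhou [set zl | Phi0 zl.1 = zl.2]) * (xi^-1)%:E)%E) /\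
  (exists M : R, forall lam, lam \in opt_duals Phi0 Phi1 c rho rhou rhoo C beta Pi ->
     0 <= lam <= M).
Proof.
move=> mP0 mP1 c0 c1 mc hPi Pi0 b0 C1 xi0 xiC.
set A := [set zl | Phi0 zl.1 = zl.2].
set D := dual_fun Phi0 Phi1 c rho rhou rhoo C beta Pi.
have mA : measurable A.
  have -> : A = (fst @^-1` (Phi0 @^-1` [set true]) `&` snd @^-1` [set true])
      `|` (fst @^-1` (Phi0 @^-1` [set false]) `&` snd @^-1` [set false]).
    apply/seteqP; split => -[z l] /=; rewrite /A /=.
      by case: l; case: (Phi0 z) => // _; [left|right].
    by case => -[] /= -> ->.
  apply: measurableU; apply: measurableI.
  - by rewrite -[X in measurable X]setTI; apply: measurable_fst => //; exact: preim_meas.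
  - by rewrite -[X in measurable X]setTI; apply: measurable_snd.
  - by rewrite -[X in measurable X]setTI; apply: measurable_fst => //; exact: preim_meas.
  - by rewrite -[X in measurable X]setTI; apply: measurable_snd.
have Afin : rhou A \is a fin_num.
  by rewrite ge0_fin_numE // (le_lt_trans (probability_le1 _ mA)) // ltry.
set P := fine (rhou A).
have PE : rhou A = P%:E by rewrite fineK.
have lb : forall lam, 0 <= lam -> ((P + lam * xi)%:E <= D lam)%E.
  move=> lam l0.
  have L0 : lagrangian Phi0 Phi1 c rho rhou rhoo C beta (@pi0 R d Z) lam
      = (P - lam * (1 - C) + beta * (lam ^+ 2 / 2))%:E.
    rewrite /lagrangian /pol_expect /entropy.
    have -> : (\int[rhou]_zl (\sum_a pi0 R zl.1 a * reward R Phi0 Phi1 zl.1 a zl.2)%:E)%E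
        = P%:E.
      transitivity (\int[rhou]_zl (\1_A zl)%:E)%E.
        apply: eq_integral => -[z l] _; rewrite big_bool /pi0 /= mul0r add0r mul1r.
        have eA : ((z,l) \in A) = (Phi0 z == l) by apply/idP/eqP => [/set_mem | /mem_set].
        by rewrite indicE /reward /= eA.
      rewrite (integral_indic _ _ mA); last exact: measurableT.
      by rewrite setIT.
    have -> : (\int[rhoo]_zl (\sum_a pi0 R zl.1 a * c zl.1 a)%:E)%E = 1%E.
      rewrite -(int_cst_prob rhoo 1).
      by apply: eq_integral => -[z l] _; rewrite big_bool /pi0 /= mul0r add0r mul1r c1.
    have -> : (\int[rho]_zl (- \sum_a pi0 R zl.1 a * ln (pi0 R zl.1 a))%:E)%E
        = (\int[rho]_zl (cst 0%:E) zl)%E.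
      by apply: eq_integral => -[z l] _; rewrite big_bool /pi0 /= mul0r add0r mul1r ln1 oppr0.
    by rewrite integral0 add0e -EFinB -!EFinM -!EFinD.
  have Lle : (lagrangian Phi0 Phi1 c rho rhou rhoo C beta (@pi0 R d Z) lam <= D lam)%E.
    by apply: ereal_sup_ubound; exists (@pi0 R d Z).
  apply: (le_trans _ Lle); rewrite L0 lee_fin.
  have h1 : lam * xi <= lam * (C - 1) by rewrite ler_wpM2l.
  have h2 : 0 <= beta * (lam ^+ 2 / 2).
    by apply: mulr_ge0; [exact: ltW | apply: divr_ge0; [exact: sqr_ge0 | by []]].
  lra.
have ub : (D 0%R <= (1 + beta * 2)%:E)%E.
  apply: ge_ereal_sup => _ [pi Ppi <-].
  have [pol _] := hPi pi Ppi.
  have pge z a : 0 <= pi z a := (pol z).1 a.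
  have psum z : pi z false + pi z true = 1 := (pol z).2.
  rewrite /lagrangian mul0e oppe0 adde0.
  have -> : ((0:R) ^+ 2 / 2) = 0 by rewrite expr2 !mul0r.
  rewrite adde0 EFinD EFinM; apply: leeD.
    rewrite /pol_expect -(int_cst_prob rhou 1).
    apply: le_int_nm => -[z l] /=; rewrite lee_fin.
      by rewrite sumr_ge0 // => a _; rewrite mulr_ge0 // /reward ler0n.
    rewrite big_bool /=.
    have := psum z; have := pge z true; have := pge z false.
    rewrite /reward; case: (_ == _); case: (_ == _) => /= ? ? ?; lra.
  apply: lee_wpmul2l; first by rewrite lee_fin ltW.
  rewrite /entropy -(int_cst_prob rho 2).
  apply: le_int_nm => -[z l] /=; rewrite lee_fin.
    have t0 : forall a, pi z a * ln (pi z a) <= 0.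
      move=> a; rewrite mulr_ge0_le0 // ln_le0 //.
      have := psum z; have := pge z true; have := pge z false.
      by case: a => /= ? ? ?; lra.
    by rewrite oppr_ge0 big_bool /=; have := t0 true; have := t0 false; lra.
  have t1 : forall a, - (pi z a * ln (pi z a)) <= 1.
    move=> a; have := pge z a; rewrite le0r => /orP[/eqP -> | pp].
      by rewrite mul0r oppr0.
    rewrite -mulrN -lnV ?posrE //.
    apply: (le_trans (_ : _ <= pi z a * (pi z a)^-1)); last by rewrite mulfV ?gt_eqF.
    by apply: ler_wpM2l; [exact: ltW | apply: ltW; apply: ln_sublinear; rewrite invr_gt0].
  by rewrite big_bool /= opprD; have := t1 true; have := t1 false; lra.
move: (lamstar) => ls; rewrite inE => -[ls0 lsopt].
have Dls_ub : (D ls <= (1 + beta * 2)%:E)%E := le_trans (lsopt 0 (lexx _)) ub.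
have Dls_lb := lb ls ls0.
have Dfin : D ls \is a fin_num.
  by rewrite fin_numElt (lt_le_trans _ Dls_lb) ?ltNyr // (le_lt_trans Dls_ub) ?ltry.
set Dr := fine (D ls).
have DE : D ls = Dr%:E by rewrite fineK.
split.
  split => //; rewrite DE PE -EFinB -EFinM lee_fin ler_pdivlMr //.
  by move: Dls_lb; rewrite DE lee_fin; lra.
exists ((Dr - P) / xi) => lam; rewrite inE => -[l0 lopt].
apply/andP; split => //; rewrite ler_pdivlMr //.
have := le_trans (lb lam l0) (lopt ls ls0 : (D lam <= D ls)%E); rewrite DE lee_fin; lra.
Qed.
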